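(* Let $\Gamma$ be a group and let $S$ and $T$ be $\Gamma$-graded semigroups with local units. If $S$ and $T$ are graded Morita equivalent, then they are Morita equivalent.
   Context: All semigroups have a zero; a $\Gamma$-grading on $S$ is a map $\deg:S\setminus\{0\}\to\Gamma$ with $\deg(st)=\deg(s)\deg(t)$ when $st\neq0$, $S_\alpha=\deg^{-1}(\alpha)\cup\{0\}$. $S$ has local units if for each $s$ there are idempotents $u,v$ with $us=s=sv$. Left $S$-sets are pointed (with $0_X$, $0x=0_X$) and unital ($SX=X$); a $\Gamma$-graded left $S$-set has $\deg:X\setminus\{0_X\}\to\Gamma$ with $\deg(sx)=\deg(s)\deg(x)$ when $sx\neq0_X$, $X_\alpha=\deg^{-1}(\alpha)\cup\{0_X\}$. For a left $S$-set $X$, $S\otimes_S X$ is $S\times X$ modulo the equivalence relation generated by $(st,x)\sim(s,tx)$; $X$ is closed if the map $S\otimes_S X\to X$, $s\otimes x\mapsto sx$, is bijective. $\mathrm{FAct}\text{-}S$ is the category of closed left $S$-sets with $S$-maps; $\mathrm{FGrAct}\text{-}S$ is the category of closed $\Gamma$-graded left $S$-sets with graded $S$-maps ($\phi(X_\alpha)\subseteq Y_\alpha$). For $\alpha\in\Gamma$ the shift functor $\mathcal{T}_\alpha$ sends a graded $X$ to $X(\alpha)$, the same $S$-set with $X(\alpha)_\beta=X_{\beta\alpha}$, and is the identity on morphisms. A functor $\mathcal F$ between such graded categories is graded if $\mathcal F\mathcal T_\alpha=\mathcal T_\alpha\mathcal F$ for all $\alpha$; a graded equivalence is a graded functor $\mathcal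 F$ with a graded functor $\mathcal F'$ such that $\mathcal F'\mathcal F$ and $\mathcal F\mathcal F'$ are naturally isomorphic to the identities. $S$ and $T$ are graded Morita equivalent if there is a graded equivalence between $\mathrm{FGrAct}\text{-}S$ and $\mathrm{FGrAct}\text{-}T$, and Morita equivalent if $\mathrm{FAct}\text{-}S$ and $\mathrm{FAct}\text{-}T$ are equivalent categories. *)

(* Defs.v *)
From Stdlib Require Import Relation_Operators.

Set Implicit Arguments.
Unset Strict Implicit.

Record Group := {
  gr_car :> Type;
  gmul : gr_car -> gr_car -> gr_car;
  gone : gr_car;
  ginv : gr_car -> gr_car;
  gmulA : forall a b c, gmul a (gmul b c) = gmul (gmul a b) c;
  gmul1l : forall a, gmul gone a = a;
  gmul1r : forall a, gmul a gone = a;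
  gmulVl : forall a, gmul (ginv a) a = gone;
  gmulVr : forall a, gmul a (ginv a) = gone
}.
Arguments gmul {g}.
Arguments gone {g}.
Arguments ginv {g}.

Record SemigroupZ := {
  sg_car :> Type;
  smul : sg_car -> sg_car -> sg_car;
  szero : sg_car;
  smulA : forall s t u, smul s (smul t u) = smul (smul s t) u;
  smul0l : forall s, smul szero s = szero;
  smul0r : forall s, smul s szero = szero
}.
Arguments smul {_} _ _.
Arguments szero {_}.

Definition idempotent (S : SemigroupZ) (u : S) : Prop := smul u u = u.
Definition has_local_units (S : SemigroupZ) : Prop :=
  forall s : S, exists u v : S,
    idempotent u /\ idempotent v /\ smul u s = s /\ smul s v = s.

(* Gamma-graded semigroups.  deg is only constrained on nonzero
   products; its value at 0 is irrelevant (S_alpha = deg^-1(alpha) U {0}). *)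
Record GrSemigroup (G : Group) := {
  gs_sg :> SemigroupZ;
  gs_deg : gs_sg -> G;
  gs_degM : forall s t : gs_sg, smul s t <> szero ->
     gs_deg (smul s t) = gmul (gs_deg s) (gs_deg t)
}.

Record SAct (S : SemigroupZ) := {
  act_car :> Type;
  act_zero : act_car;
  act : S -> act_car -> act_car;
  actA : forall (s t : S) x, act (smul s t) x = act s (act t x);
  act0 : forall x, act szero x = act_zero;
  act_unital : forall x, exists (s : S) (y : act_car), act s y = x
}.
Arguments act_zero {_ _}.
Arguments act {_ _} _ _.

(* S (x)_S X : the generating relation (st, x) ~ (s, tx) and the
   equivalence relation it generates on S * X. *)
Definition tens_step (S : SemigroupZ) (X : SAct S) (p q : S * X) : Prop :=
  exists (s t : S) (x : X), p = (smul s t, x) /\ q = (s, act t x).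
Definition tens_equiv (S : SemigroupZ) (X : SAct S) : S * X -> S * X -> Prop :=
  clos_refl_sym_trans _ (@tens_step S X).

(* X is closed: the (well-defined) map S (x)_S X -> X, s (x) x |-> s x, is
   bijective, i.e. surjective, and injective on equivalence classes. *)
Definition closed_act (S : SemigroupZ) (X : SAct S) : Prop :=
  (forall x : X, exists p : S * X, act (fst p) (snd p) = x) /\
  (forall p q : S * X, act (fst p) (snd p) = act (fst q) (snd q) ->
                       tens_equiv p q).

Record SMap (S : SemigroupZ) (X Y : SAct S) := {
  smap :> X -> Y;
  smap_act : forall (s : S) x, smap (act s x) = act s (smap x)
}.

Record GrSAct (G : Group) (S : GrSemigroup G) := {
  gact :> SAct S;
  gact_deg : gact -> G;
  gact_degM : forall (s : S) (x : gact), act s x <> act_zero ->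
     gact_deg (act s x) = gmul (gs_deg s) (gact_deg x)
}.
Arguments gact_deg {_ _ _} _.

Definition homog (G : Group) (S : GrSemigroup G) (X : GrSAct S) (a : G) (x : X)
  : Prop := x = act_zero \/ gact_deg x = a.

Record GrSMap (G : Group) (S : GrSemigroup G) (X Y : GrSAct S) := {
  gsmap :> SMap X Y;
  gsmap_deg : forall (a : G) (x : X), homog a x -> homog a (gsmap x)
}.

(* Minimal category theory (morphism equality is a setoid equality Heq;
   for the concrete categories below Heq is pointwise equality of maps). *)
Record Cat := {
  Ob :> Type;
  Hom : Ob -> Ob -> Type;
  Heq : forall A B, Hom A B -> Hom A B -> Prop;
  idm : forall A, Hom A A;
  comp : forall A B C, Hom B C -> Hom A B -> Hom A C;
  heq_refl : forall A B (f : Hom A B), Heq f f;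
  heq_sym : forall A B (f g : Hom A B), Heq f g -> Heq g f;
  heq_trans : forall A B (f g h : Hom A B), Heq f g -> Heq g h -> Heq f h;
  comp_heq : forall A B C (f f' : Hom B C) (g g' : Hom A B),
      Heq f f' -> Heq g g' -> Heq (comp f g) (comp f' g');
  comp_idl : forall A B (f : Hom A B), Heq (comp (idm B) f) f;
  comp_idr : forall A B (f : Hom A B), Heq (comp f (idm A)) f;
  compA : forall A B C D (h : Hom C D) (g : Hom B C) (f : Hom A B),
      Heq (comp h (comp g f)) (comp (comp h g) f)
}.
Arguments Hom {c}.
Arguments Heq {c A B}.
Arguments idm {c}.
Arguments comp {c A B C}.

Record Functor (C D : Cat) := {
  fobj :> C -> D;
  fmap : forall A B, Hom A B -> Hom (fobj A) (fobj B);
  fmap_heq : forall A B (f g : Hom A B), Heq f g -> Heq (fmap f) (fmap g);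
  fmap_id : forall A, Heq (fmap (idm A)) (idm (fobj A));
  fmap_comp : forall A B C (g : Hom B C) (f : Hom A B),
      Heq (fmap (comp g f)) (comp (fmap g) (fmap f))
}.
Arguments fmap {C D} _ {A B} _.

Definition IdF (C : Cat) : Functor C C.
Proof.
  refine {| fobj := fun A => A; fmap := fun A B f => f |}.
  - auto.
  - intros; apply heq_refl.
  - intros; apply heq_refl.
Defined.

Definition CompF (C D E : Cat) (G : Functor D E) (F : Functor C D)
  : Functor C E.
Proof.
  refine {| fobj := fun A => G (F A);
            fmap := fun A B f => fmap G (fmap F f) |}.
  - intros A B f g H. apply fmap_heq, fmap_heq, H.
  - intros A. eapply heq_trans; [apply fmap_heq, fmap_id | apply fmap_id].
  - intros A B C0 g f. eapply heq_trans;
      [apply fmap_heq, fmap_comp | apply fmap_comp].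
Defined.

Record NatIso (C D : Cat) (F G : Functor C D) := {
  ni_eta : forall A, Hom (F A) (G A);
  ni_inv : forall A, Hom (G A) (F A);
  ni_inv_eta : forall A, Heq (comp (ni_inv A) (ni_eta A)) (idm (F A));
  ni_eta_inv : forall A, Heq (comp (ni_eta A) (ni_inv A)) (idm (G A));
  ni_nat : forall A B (f : Hom A B),
      Heq (comp (ni_eta B) (fmap F f)) (comp (fmap G f) (ni_eta A))
}.

Definition CatEquivalent (C D : Cat) : Prop :=
  exists (F : Functor C D) (F' : Functor D C),
    inhabited (NatIso (CompF F' F) (IdF C)) /\
    inhabited (NatIso (CompF F F') (IdF D)).

Definition hom_cast (C : Cat) (A A' B B' : C) (e1 : A = A') (e2 : B = B')
  (f : Hom A B) : Hom A' B' :=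
  match e1 in _ = A1, e2 in _ = B1 return Hom A1 B1 with
  | eq_refl, eq_refl => f end.

Definition FunctorEq (C D : Cat) (F G : Functor C D) : Prop :=
  exists e : forall A, F A = G A,
    forall A B (f : Hom A B), Heq (hom_cast (e A) (e B) (fmap F f)) (fmap G f).

Record FActOb (S : SemigroupZ) := {
  fa_act :> SAct S;
  fa_closed : closed_act fa_act
}.

Definition FAct (S : SemigroupZ) : Cat.
Proof.
  refine {| Ob := FActOb S;
            Hom := fun X Y => SMap X Y;
            Heq := fun X Y f g => forall x, f x = g x;
            idm := fun X => {| smap := fun x => x; smap_act := fun s x => eq_refl |};
            comp := fun X Y Z g f => {| smap := fun x => g (f x);
              smap_act := fun s x => eq_trans (f_equal g (smap_act f s x)) (smap_act g s (f x)) |} |};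
    intros; simpl in *; congruence.
Defined.

Record FGrActOb (G : Group) (S : GrSemigroup G) := {
  fg_act :> GrSAct S;
  fg_closed : closed_act fg_act
}.

Definition gid (G : Group) (S : GrSemigroup G) (X : GrSAct S) : GrSMap X X.
Proof.
  refine {| gsmap := {| smap := fun x => x; smap_act := fun s x => eq_refl |} |}; auto.
Defined.

Definition gcomp (G : Group) (S : GrSemigroup G) (X Y Z : GrSAct S)
  (g : GrSMap Y Z) (f : GrSMap X Y) : GrSMap X Z.
Proof.
  refine {| gsmap := {| smap := fun x => g (f x);
     smap_act := fun s x => eq_trans (f_equal g (smap_act f s x)) (smap_act g s (f x)) |} |}.
  intros a x H; simpl; apply gsmap_deg, gsmap_deg, H.
Defined.

Definition FGrAct (G : Group) (S : GrSemigroup G) : Cat.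
Proof.
  refine {| Ob := FGrActOb S;
            Hom := fun X Y => GrSMap X Y;
            Heq := fun X Y f g => forall x, f x = g x;
            idm := fun X => gid X;
            comp := fun X Y Z g f => gcomp g f |};
    intros; simpl in *; congruence.
Defined.

(* shift X(alpha): same S-set, X(alpha)_beta = X_(beta alpha), i.e. the
   new degree of x is deg(x) alpha^-1. *)
Lemma shift_degM (G : Group) (S : GrSemigroup G) (X : GrSAct S) (a : G) :
  forall (s : S) (x : X), act s x <> act_zero ->
    gmul (gact_deg (act s x)) (ginv a) =
    gmul (gs_deg s) (gmul (gact_deg x) (ginv a)).
Proof.
  intros s x H. rewrite gact_degM by exact H. symmetry; apply gmulA.
Qed.

Definition shift_gr (G : Group) (S : GrSemigroup G) (a : G) (X : GrSAct S)
  : GrSAct S :=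
  {| gact := X; gact_deg := fun x => gmul (gact_deg x) (ginv a);
     gact_degM := @shift_degM G S X a |}.

Definition shiftOb (G : Group) (S : GrSemigroup G) (a : G) (X : FGrActOb S)
  : FGrActOb S :=
  {| fg_act := shift_gr a X; fg_closed := fg_closed X |}.

Lemma shift_hom_deg (G : Group) (S : GrSemigroup G) (a : G) (X Y : GrSAct S)
  (f : GrSMap X Y) :
  forall (b : G) (x : shift_gr a X), homog b x -> homog b (f x : shift_gr a Y).
Proof.
  intros b x [H|H]; unfold homog in *; simpl in *.
  - left. rewrite H. rewrite <- (@act0 S X act_zero), smap_act, act0.
    reflexivity.
  - assert (Hx : homog (gmul b a) x).
    { right. rewrite <- H, <- gmulA, gmulVl, gmul1r. reflexivity. }
    destruct (gsmap_deg f Hx) as [H'|H'].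
    + left; exact H'.
    + right. rewrite H', <- gmulA, gmulVr, gmul1r. reflexivity.
Qed.

Definition shift_hom (G : Group) (S : GrSemigroup G) (a : G) (X Y : GrSAct S)
  (f : GrSMap X Y) : GrSMap (shift_gr a X) (shift_gr a Y) :=
  @Build_GrSMap G S (shift_gr a X) (shift_gr a Y)
    (@Build_SMap S (shift_gr a X) (shift_gr a Y) (fun x => f x) (smap_act f))
    (@shift_hom_deg G S a X Y f).

Definition ShiftF (G : Group) (S : GrSemigroup G) (a : G)
  : Functor (FGrAct S) (FGrAct S).
Proof.
  refine (@Build_Functor (FGrAct S) (FGrAct S)
            (fun X : FGrAct S => (shiftOb a X : FGrAct S))
            (fun (X Y : FGrAct S) (f : Hom X Y) =>
               (shift_hom a (f : GrSMap X Y) : @Hom (FGrAct S) (shiftOb a X) (shiftOb a Y)))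
            _ _ _);
    intros; simpl in *; auto.
Defined.

Definition graded_functor (G : Group) (S T : GrSemigroup G)
  (F : Functor (FGrAct S) (FGrAct T)) : Prop :=
  forall a : G, FunctorEq (CompF F (ShiftF S a)) (CompF (ShiftF T a) F).

Definition graded_Morita_equivalent (G : Group) (S T : GrSemigroup G) : Prop :=
  exists (F : Functor (FGrAct S) (FGrAct T)) (F' : Functor (FGrAct T) (FGrAct S)),
    graded_functor F /\ graded_functor F' /\
    inhabited (NatIso (CompF F' F) (IdF (FGrAct S))) /\
    inhabited (NatIso (CompF F F') (IdF (FGrAct T))).

Definition Morita_equivalent (S T : SemigroupZ) : Prop :=
  CatEquivalent (FAct S) (FAct T).

(* Main.v *)
Require Import Defs.
From Stdlib Require Import Relation_Operators ClassicalEpsilon ProofIrrelevance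
  FunctionalExtensionality Setoid Morphisms.

Set Implicit Arguments.
Unset Strict Implicit.


#[export] Instance Heq_Equiv (C : Cat) (A B : C) : Equivalence (@Heq C A B).
Proof. split; red; [apply heq_refl | apply heq_sym | apply heq_trans]. Qed.

#[export] Instance comp_Proper (C : Cat) (A B D : C) :
  Proper (Heq ==> Heq ==> Heq) (@comp C A B D).
Proof. intros f f' Hf g g' Hg. apply comp_heq; auto. Qed.

#[export] Instance fmap_Proper (C D : Cat) (F : Functor C D) (A B : C) :
  Proper (Heq ==> Heq) (@fmap C D F A B).
Proof. intros f g H. apply fmap_heq, H. Qed.

Definition faithful (C D : Cat) (F : Functor C D) : Prop :=
  forall A B (f g : Hom A B), Heq (fmap F f) (fmap F g) -> Heq f g.
Definition full (C D : Cat) (F : Functor C D) : Prop :=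
  forall A B (h : Hom (F A) (F B)), exists f, Heq (fmap F f) h.
Definition isIso (C : Cat) (A B : C) : Prop :=
  exists (i : Hom A B) (j : Hom B A), Heq (comp j i) (idm A) /\ Heq (comp i j) (idm B).
Definition esurj (C D : Cat) (F : Functor C D) : Prop :=
  forall B, exists A, isIso (F A) B.
Definition ffes (C D : Cat) (F : Functor C D) : Prop :=
  faithful F /\ full F /\ esurj F.

Lemma cidT {A : Type} {P : A -> Prop} (H : exists x, P x) : {x | P x}.
Proof. apply constructive_indefinite_description, H. Defined.

Record ffes_data (C D : Cat) (F : Functor C D) := {
  G0 : D -> C;
  gi : forall B, Hom (F (G0 B)) B;
  gj : forall B, Hom B (F (G0 B));
  gji : forall B, Heq (comp (gj B) (gi B)) (idm _);
  gij : forall B, Heq (comp (gi B) (gj B)) (idm _);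
  pre : forall A B, Hom (F A) (F B) -> Hom A B;
  pre_spec : forall A B (h : Hom (F A) (F B)), Heq (fmap F (pre h)) h
}.

Lemma get_ffes_data (C D : Cat) (F : Functor C D) :
  full F -> esurj F -> inhabited (ffes_data F).
Proof.
  intros Hfu Hes. constructor.
  pose (a := fun B => cidT (Hes B)).
  pose (i := fun B => cidT (proj2_sig (a B))).
  pose (j := fun B => cidT (proj2_sig (i B))).
  refine {| G0 := fun B => proj1_sig (a B);
            gi := fun B => proj1_sig (i B);
            gj := fun B => proj1_sig (j B);
            pre := fun A B h => proj1_sig (cidT (Hfu A B h)) |}.
  - intros B. exact (proj1 (proj2_sig (j B))).
  - intros B. exact (proj2 (proj2_sig (j B))).
  - intros A B h. exact (proj2_sig (cidT (Hfu A B h))).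
Qed.


Definition ffes_inv (C D : Cat) (F : Functor C D) (Hfa : faithful F) (dat : ffes_data F)
  : Functor D C.
Proof.
    refine {| fobj := G0 dat;
              fmap := fun B B' h => pre dat (comp (gj dat B') (comp h (gi dat B))) |}.
    - intros B B' f g H. apply Hfa. rewrite !pre_spec, H. reflexivity.
    - intros B. apply Hfa. rewrite pre_spec, fmap_id, comp_idl, gji. reflexivity.
    - intros B1 B2 B3 g f. apply Hfa. rewrite fmap_comp, !pre_spec.
      symmetry.
      rewrite <- (compA (gj dat B3) (comp g (gi dat B2)) _).
      apply comp_heq; [reflexivity|].
      rewrite <- (compA g (gi dat B2) _).
      rewrite (compA (gi dat B2) (gj dat B2) _), gij, comp_idl, compA. reflexivity.
Defined.

Lemma ffes_equiv (C D : Cat) (F : Functor C D) : ffes F -> CatEquivalent C D.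
Proof.
  intros [Hfa [Hfu Hes]].
  destruct (get_ffes_data Hfu Hes) as [dat].
  exists F, (ffes_inv Hfa dat). split; constructor.
  - refine (@Build_NatIso C C (CompF (ffes_inv Hfa dat) F) (IdF C)
       (fun A => pre dat (gi dat (F A))) (fun A => pre dat (gj dat (F A))) _ _ _).
    + intros A. apply Hfa. simpl. rewrite fmap_comp, !pre_spec, fmap_id, gji. reflexivity.
    + intros A. apply Hfa. simpl. rewrite fmap_comp, !pre_spec, fmap_id, gij. reflexivity.
    + intros A B f. apply Hfa. simpl. rewrite !fmap_comp, !pre_spec.
      rewrite !compA, gij, comp_idl. reflexivity.
  - refine (@Build_NatIso D D (CompF F (ffes_inv Hfa dat)) (IdF D)
       (fun B => gi dat B) (fun B => gj dat B) _ _ _).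
    + intros B. apply gji.
    + intros B. apply gij.
    + intros B B' h. simpl. rewrite pre_spec, !compA, gij, comp_idl. reflexivity.
Qed.

Lemma iso_inv_l (C : Cat) (A B X : C) (i : Hom A B) (j : Hom B A) (f g : Hom X A) :
  Heq (comp j i) (idm A) -> Heq (comp i f) (comp i g) -> Heq f g.
Proof.
  intros H1 H2.
  rewrite <- (comp_idl f), <- (comp_idl g), <- H1, <- !compA, H2. reflexivity.
Qed.

Lemma faithful_of (C D : Cat) (F : Functor C D) (F' : Functor D C)
  (eta : NatIso (CompF F' F) (IdF C)) : faithful F.
Proof.
  intros A B f g H.
  assert (E : forall h : Hom A B,
    Heq h (comp (ni_eta eta B) (comp (fmap F' (fmap F h)) (ni_inv eta A)))).
  { intros h. rewrite compA. pose proof (ni_nat eta h) as N. simpl in N.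
    rewrite N, <- compA. pose proof (ni_eta_inv eta A) as Q. simpl in Q. rewrite Q, comp_idr. reflexivity. }
  rewrite (E f), (E g), H. reflexivity.
Qed.

Lemma equiv_ffes (C D : Cat) (F : Functor C D) (F' : Functor D C)
  (eta : NatIso (CompF F' F) (IdF C)) (eps : NatIso (CompF F F') (IdF D)) : ffes F.
Proof.
  split; [|split].
  - exact (faithful_of eta).
  - intros A B h.
    exists (comp (ni_eta eta B) (comp (fmap F' h) (ni_inv eta A))).
    apply (faithful_of eps).
    pose proof (ni_nat eta (comp (ni_eta eta B) (comp (fmap F' h) (ni_inv eta A)))) as N.
    simpl in N.
    pose proof (ni_inv_eta eta B) as Q. simpl in Q.
    apply (iso_inv_l Q).
    rewrite N. pose proof (ni_inv_eta eta A) as Q'. simpl in Q'.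
    rewrite <- !compA, Q', comp_idr. reflexivity.
  - intros B. exists (F' B). exists (ni_eta eps B), (ni_inv eps B).
    split; [exact (ni_inv_eta eps B) | exact (ni_eta_inv eps B)].
Qed.

Lemma CatEquivalent_sym (C D : Cat) : CatEquivalent C D -> CatEquivalent D C.
Proof. intros (F & F' & H1 & H2). exists F', F. auto. Qed.

Lemma CatEquivalent_ffes (C D : Cat) : CatEquivalent C D -> exists F : Functor C D, ffes F.
Proof. intros (F & F' & [H1] & [H2]). exists F. exact (equiv_ffes H1 H2). Qed.

Lemma iso_trans (C : Cat) (A B E : C) : isIso A B -> isIso B E -> isIso A E.
Proof.
  intros (i & j & H1 & H2) (i' & j' & H1' & H2').
  exists (comp i' i), (comp j j'). split.
  - rewrite <- compA, (compA j' i' i), H1', comp_idl, H1. reflexivity.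
  - rewrite <- compA, (compA i j j'), H2, comp_idl, H2'. reflexivity.
Qed.

Lemma iso_fmap (C D : Cat) (F : Functor C D) (A B : C) : isIso A B -> isIso (F A) (F B).
Proof.
  intros (i & j & H1 & H2). exists (fmap F i), (fmap F j). split.
  - rewrite <- fmap_comp, H1, fmap_id. reflexivity.
  - rewrite <- fmap_comp, H2, fmap_id. reflexivity.
Qed.

Lemma ffes_comp (C D E : Cat) (F : Functor C D) (G : Functor D E) :
  ffes F -> ffes G -> ffes (CompF G F).
Proof.
  intros (Fa & Fu & Fe) (Ga & Gu & Ge). split; [|split].
  - intros A B f g H. apply Fa, Ga, H.
  - intros A B h. destruct (Gu _ _ h) as [k Hk]. destruct (Fu _ _ k) as [f Hf].
    exists f. simpl. rewrite Hf. exact Hk.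
  - intros Z. destruct (Ge Z) as [Y HY]. destruct (Fe Y) as [X HX].
    exists X. simpl. eapply iso_trans; [apply iso_fmap, HX | exact HY].
Qed.


Lemma gcancel_l (G : Group) (a b c : G) : gmul a b = gmul a c -> b = c.
Proof.
  intros H. rewrite <- (gmul1l b), <- (gmul1l c), <- (gmulVl a), <- !gmulA, H. reflexivity.
Qed.
Lemma gcancel_r (G : Group) (a b c : G) : gmul b a = gmul c a -> b = c.
Proof.
  intros H. rewrite <- (gmul1r b), <- (gmul1r c), <- (gmulVr a), !gmulA, H. reflexivity.
Qed.
Lemma ginv_mul (G : Group) (a b : G) : ginv (gmul a b) = gmul (ginv b) (ginv a).
Proof.
  apply (gcancel_l (a := gmul a b)). rewrite gmulVr, <- gmulA, (gmulA b), gmulVr, gmul1l, gmulVr.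
  reflexivity.
Qed.
Lemma ginv_one (G : Group) : ginv (@gone G) = gone.
Proof. rewrite <- (gmul1l (ginv gone)), gmulVr. reflexivity. Qed.
Lemma ginv_inv (G : Group) (a : G) : ginv (ginv a) = a.
Proof. apply (gcancel_l (a := ginv a)). rewrite gmulVr, gmulVl. reflexivity. Qed.
Lemma gidem (G : Group) (a : G) : gmul a a = a -> a = gone.
Proof. intros H. apply (gcancel_l (a := a)). rewrite gmul1r. exact H. Qed.
Lemma gVK (G : Group) (a b : G) : gmul (ginv a) (gmul a b) = b.
Proof. rewrite gmulA, gmulVl, gmul1l. reflexivity. Qed.
Lemma gKV (G : Group) (a b : G) : gmul a (gmul (ginv a) b) = b.
Proof. rewrite gmulA, gmulVr, gmul1l. reflexivity. Qed.
Lemma gMVK (G : Group) (a b : G) : gmul (gmul b a) (ginv a) = b.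
Proof. rewrite <- gmulA, gmulVr, gmul1r. reflexivity. Qed.
Lemma gMKV (G : Group) (a b : G) : gmul (gmul b (ginv a)) a = b.
Proof. rewrite <- gmulA, gmulVl, gmul1r. reflexivity. Qed.

Definition tr {A B : Type} (p : A = B) (a : A) : B :=
  match p in _ = B0 return B0 with eq_refl => a end.
Lemma tr_pi {A B : Type} (p q : A = B) a : tr p a = tr q a.
Proof. rewrite (proof_irrelevance _ p q). reflexivity. Qed.
Lemma tr_id {A : Type} (p : A = A) a : tr p a = a.
Proof. rewrite (proof_irrelevance _ p eq_refl). reflexivity. Qed.
Lemma tr_tr {A B E : Type} (p : A = B) (q : B = E) a : tr q (tr p a) = tr (eq_trans p q) a.
Proof. destruct q. reflexivity. Qed.
Lemma tr_sym {A B : Type} (p : A = B) (q : B = A) a : tr q (tr p a) = a.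
Proof. rewrite tr_tr. apply tr_id. Qed.

Definition Car (G : Group) (S : GrSemigroup G) (X : FGrActOb S) : Type :=
  act_car (gact (fg_act X)).
Definition ap (G : Group) (S : GrSemigroup G) (X Y : FGrActOb S) (f : @Hom (FGrAct S) X Y)
  : Car X -> Car Y := fun x => smap (gsmap (f : GrSMap X Y)) x.
Arguments Car {G S} X.
Arguments ap {G S X Y} f x.

Lemma ap_cast (G : Group) (S : GrSemigroup G) (X X' Y Y' : FGrActOb S)
  (e1 : X = X') (e2 : Y = Y') (f : @Hom (FGrAct S) X Y) x :
  ap (@hom_cast (FGrAct S) X X' Y Y' e1 e2 f) x =
  tr (f_equal Car e2) (ap f (tr (f_equal Car (eq_sym e1)) x)).
Proof. destruct e1, e2. reflexivity. Qed.

Lemma fmap_cast (C D : Cat) (F : Functor C D) (X X' Y Y' : C)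
  (e1 : X = X') (e2 : Y = Y') (f : Hom X Y) :
  fmap F (hom_cast e1 e2 f) = hom_cast (f_equal F e1) (f_equal F e2) (fmap F f).
Proof. destruct e1, e2. reflexivity. Qed.

Lemma FGrOb_ext (G : Group) (S : GrSemigroup G) (X : SAct S) (d1 d2 : X -> G) p1 p2 c1 c2 :
  (forall x, d1 x = d2 x) ->
  @Build_FGrActOb G S (@Build_GrSAct G S X d1 p1) c1 =
  @Build_FGrActOb G S (@Build_GrSAct G S X d2 p2) c2.
Proof.
  intros H. assert (E : d1 = d2) by (apply functional_extensionality; exact H).
  subst d2. rewrite (proof_irrelevance _ p1 p2). f_equal. apply proof_irrelevance.
Qed.

Lemma shiftOb_shiftOb (G : Group) (S : GrSemigroup G) (g h : G) (A : FGrActOb S) :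
  shiftOb g (shiftOb h A) = shiftOb (gmul g h) A.
Proof.
  destruct A as [[X d dM] c]. unfold shiftOb, shift_gr. simpl. apply FGrOb_ext.
  intros x. rewrite ginv_mul, gmulA. reflexivity.
Qed.

Lemma shiftOb_one (G : Group) (S : GrSemigroup G) (A : FGrActOb S) :
  shiftOb gone A = A.
Proof.
  destruct A as [[X d dM] c]. unfold shiftOb, shift_gr. simpl. apply FGrOb_ext.
  intros x. rewrite ginv_one, gmul1r. reflexivity.
Qed.

Lemma heqE (G : Group) (S : GrSemigroup G) (X Y : FGrActOb S) (f g : @Hom (FGrAct S) X Y) :
  @Heq (FGrAct S) X Y f g <-> (forall x, ap f x = ap g x).
Proof. reflexivity. Qed.
Lemma ap_comp (G : Group) (S : GrSemigroup G) (X Y Z : FGrActOb S)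
  (g : @Hom (FGrAct S) Y Z) (f : @Hom (FGrAct S) X Y) x :
  ap (@comp (FGrAct S) X Y Z g f) x = ap g (ap f x).
Proof. reflexivity. Qed.
Lemma ap_idm (G : Group) (S : GrSemigroup G) (X : FGrActOb S) x :
  ap (@idm (FGrAct S) X) x = x.
Proof. reflexivity. Qed.
Lemma ap_shift (G : Group) (S : GrSemigroup G) a (X Y : FGrActOb S) (f : @Hom (FGrAct S) X Y) x :
  ap (fmap (ShiftF S a) f) x = ap f x.
Proof. reflexivity. Qed.
Lemma ap_fmap_heq (G : Group) (S T : GrSemigroup G) (F : Functor (FGrAct S) (FGrAct T))
  (X Y : FGrActOb S) (f g : @Hom (FGrAct S) X Y) y :
  @Heq (FGrAct S) X Y f g -> ap (fmap F f) y = ap (fmap F g) y.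
Proof. intros H. apply (fmap_heq F H). Qed.
Lemma ap_fmap_comp (G : Group) (S T : GrSemigroup G) (F : Functor (FGrAct S) (FGrAct T))
  (X Y Z : FGrActOb S) (g : @Hom (FGrAct S) Y Z) (f : @Hom (FGrAct S) X Y) y :
  ap (fmap F (@comp (FGrAct S) X Y Z g f)) y = ap (fmap F g) (ap (fmap F f) y).
Proof. apply (fmap_comp F g f). Qed.
Lemma ap_fmap_id (G : Group) (S T : GrSemigroup G) (F : Functor (FGrAct S) (FGrAct T))
  (X : FGrActOb S) y :
  ap (fmap F (@idm (FGrAct S) X)) y = y.
Proof. apply (fmap_id F X). Qed.
Lemma tr_2 {A B D : Type} (p : A = D) (q : B = D) (s : A = B) x :
  tr p x = tr q (tr s x).
Proof. destruct s, q. apply tr_id. Qed.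
Lemma tr_3 {A B C D : Type} (p : A = D) (q : C = D) (r : B = C) (s : A = B) x :
  tr p x = tr q (tr r (tr s x)).
Proof. destruct s, r, q. apply tr_id. Qed.


Record EqOb (G : Group) (S : GrSemigroup G) := {
  eo :> FGrActOb S;
  epsi : forall g : G, @Hom (FGrAct S) eo (shiftOb g eo);
  epsi_comp : forall g h (x : Car eo), ap (epsi h) (ap (epsi g) x) = ap (epsi (gmul g h)) x;
  epsi_one : forall x : Car eo, ap (epsi gone) x = x }.

Record EqHom (G : Group) (S : GrSemigroup G) (A B : EqOb S) := {
  eh :> @Hom (FGrAct S) (eo A) (eo B);
  eh_eq : forall g x, ap eh (ap (epsi A g) x) = ap (epsi B g) (ap eh x) }.

Definition EqCat (G : Group) (S : GrSemigroup G) : Cat.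
Proof.
  refine {| Ob := EqOb S;
            Hom := fun A B => EqHom A B;
            Heq := fun A B f g => forall x, ap (eh f) x = ap (eh g) x;
            idm := fun A => {| eh := @idm (FGrAct S) (eo A); eh_eq := fun g x => eq_refl |};
            comp := fun A B C g f => {| eh := @comp (FGrAct S) _ _ _ (eh g) (eh f);
               eh_eq := fun g0 x => eq_trans (f_equal (ap (eh g)) (eh_eq f g0 x))
                                             (eh_eq g g0 (ap f x)) |} |}.
  all: intros; rewrite ?ap_comp; try congruence.
  all: cbn [eh]; rewrite ?ap_comp, ?ap_idm; try congruence.
Defined.

Lemma shc (G : Group) (S T : GrSemigroup G) (F : Functor (FGrAct S) (FGrAct T))
  (H : graded_functor F) a (A : FGrActOb S) :
  fobj F (shiftOb a A) = shiftOb a (fobj F A).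
Proof. destruct (H a) as [e _]. exact (e A). Qed.

Lemma shc_ap (G : Group) (S T : GrSemigroup G) (F : Functor (FGrAct S) (FGrAct T))
  (H : graded_functor F) a (A B : FGrActOb S) (f : @Hom (FGrAct S) A B) y :
  tr (f_equal Car (shc H a B))
     (ap (fmap F (fmap (ShiftF S a) f)) (tr (f_equal Car (eq_sym (shc H a A))) y))
  = ap (fmap F f) y.
Proof.
  destruct (H a) as [e He]. specialize (He A B f).
  pose proof (ap_cast (e A) (e B) (fmap F (fmap (ShiftF S a) f)) y) as K.
  pose proof (He y) as Hy.
  unfold ap in K |- *. simpl in Hy, K. rewrite <- Hy, K.
  rewrite (tr_pi (f_equal Car (eq_sym (shc H a A))) (f_equal Car (eq_sym (e A)))).
  apply tr_pi.
Qed.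

Lemma shc_ap' (G : Group) (S T : GrSemigroup G) (F : Functor (FGrAct S) (FGrAct T))
  (H : graded_functor F) a (A B : FGrActOb S) (f : @Hom (FGrAct S) A B) w :
  ap (fmap F (fmap (ShiftF S a) f)) w =
  tr (f_equal Car (eq_sym (shc H a B))) (ap (fmap F f) (tr (f_equal Car (shc H a A)) w)).
Proof.
  rewrite <- (@shc_ap G S T F H a A B f). rewrite tr_sym, tr_sym. reflexivity.
Qed.

Definition psiF (G : Group) (S T : GrSemigroup G) (F : Functor (FGrAct S) (FGrAct T))
  (H : graded_functor F) (A : FGrActOb S) g (p : @Hom (FGrAct S) A (shiftOb g A))
  : @Hom (FGrAct T) (fobj F A) (shiftOb g (fobj F A)) :=
  @hom_cast (FGrAct T) _ _ _ _ eq_refl (shc H g A) (fmap F p).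

Lemma psiF_ap (G : Group) (S T : GrSemigroup G) (F : Functor (FGrAct S) (FGrAct T))
  (H : graded_functor F) (A : FGrActOb S) g (p : @Hom (FGrAct S) A (shiftOb g A)) y :
  ap (psiF H p) y = tr (f_equal Car (shc H g A)) (ap (fmap F p) y).
Proof. unfold psiF. rewrite ap_cast. reflexivity. Qed.

Lemma psiF_comp (G : Group) (S T : GrSemigroup G) (F : Functor (FGrAct S) (FGrAct T))
  (H : graded_functor F) (A : FGrActOb S) g h
  (pg : @Hom (FGrAct S) A (shiftOb g A)) (ph : @Hom (FGrAct S) A (shiftOb h A))
  (pgh : @Hom (FGrAct S) A (shiftOb (gmul g h) A)) :
  (forall x, ap ph (ap pg x) = ap pgh x) ->
  forall y, ap (psiF H ph) (ap (psiF H pg) y) = ap (psiF H pgh) y.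
Proof.
  intros Hc y.
  set (c := @comp (FGrAct S) _ _ _ (fmap (ShiftF S g) ph) pg).
  pose (E := shiftOb_shiftOb g h A).
  assert (F1 : @Heq (FGrAct S) _ _ (@hom_cast (FGrAct S) _ _ _ _ eq_refl E c) pgh).
  { apply heqE. intros x. rewrite ap_cast, tr_id. simpl. apply Hc. }
  pose proof (ap_fmap_heq (F:=F) y F1) as F2.
  rewrite fmap_cast, ap_cast in F2. simpl in F2.
  unfold c in F2. rewrite ap_fmap_comp in F2.
  rewrite !psiF_ap. rewrite <- F2.
  rewrite (@shc_ap' G S T F H g A (shiftOb h A) ph).
  apply tr_3.
Qed.

Definition EqF_ob (G : Group) (S T : GrSemigroup G) (F : Functor (FGrAct S) (FGrAct T))
  (H : graded_functor F) (A : EqOb S) : EqOb T.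
Proof.
  refine {| eo := fobj F (eo A); epsi := fun g => psiF H (epsi A g) |}.
  - intros g h y. apply psiF_comp. apply epsi_comp.
  - intros y. rewrite psiF_ap.
    assert (K : @Heq (FGrAct S) _ _
                  (@hom_cast (FGrAct S) _ _ _ _ eq_refl (shiftOb_one (eo A)) (epsi A gone))
                  (@idm (FGrAct S) (eo A))).
    { apply heqE. intros x. rewrite ap_cast, tr_id. apply epsi_one. }
    pose proof (ap_fmap_heq (F:=F) y K) as K2.
    rewrite fmap_cast, ap_cast, ap_fmap_id in K2. simpl in K2.
    rewrite <- K2 at 2. apply tr_pi.
Defined.

Lemma EqF_hom_eq (G : Group) (S T : GrSemigroup G) (F : Functor (FGrAct S) (FGrAct T))
  (H : graded_functor F) (A B : EqOb S) (m : EqHom A B) :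
  forall g y, ap (fmap F (eh m)) (ap (epsi (EqF_ob H A) g) y) =
              ap (epsi (EqF_ob H B) g) (ap (fmap F (eh m)) y).
Proof.
  intros g y. simpl. rewrite !psiF_ap.
  assert (K : @Heq (FGrAct S) _ _
      (@comp (FGrAct S) _ _ _ (fmap (ShiftF S g) (eh m)) (epsi A g))
      (@comp (FGrAct S) _ _ _ (epsi B g) (eh m))).
  { apply heqE. intros x. rewrite !ap_comp, ap_shift. apply eh_eq. }
  pose proof (ap_fmap_heq (F:=F) y K) as K2.
  rewrite !ap_fmap_comp in K2.
  rewrite <- K2. rewrite (@shc_ap' G S T F H g _ _ (eh m)).
  rewrite tr_sym. first [reflexivity | apply tr_pi].
Qed.

Definition EqF (G : Group) (S T : GrSemigroup G) (F : Functor (FGrAct S) (FGrAct T))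
  (H : graded_functor F) : Functor (EqCat S) (EqCat T).
Proof.
  refine {| fobj := fun A : EqCat S => (EqF_ob H A : EqCat T);
            fmap := fun (A B : EqCat S) (m : Hom A B) =>
               (@Build_EqHom G T (EqF_ob H A) (EqF_ob H B) (fmap F (eh m)) (@EqF_hom_eq G S T F H A B m)
                 : @Hom (EqCat T) _ _) |}.
  - intros A B f g Hfg y. simpl. apply ap_fmap_heq. exact Hfg.
  - intros A y. simpl. apply ap_fmap_id.
  - intros A B C g f y. simpl. apply ap_fmap_comp.
Defined.

Lemma EqF_faithful (G : Group) (S T : GrSemigroup G) (F : Functor (FGrAct S) (FGrAct T))
  (H : graded_functor F) : faithful F -> faithful (EqF H).
Proof.
  intros Fa A B f g Hfg. apply (Fa _ _ (eh f) (eh g)). exact Hfg.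
Qed.

Lemma EqF_full (G : Group) (S T : GrSemigroup G) (F : Functor (FGrAct S) (FGrAct T))
  (H : graded_functor F) : faithful F -> full F -> full (EqF H).
Proof.
  intros Fa Fu A B m.
  destruct (Fu _ _ (eh m)) as [f Hf]. pose proof (proj1 (heqE _ _) Hf) as Hf'.
  assert (Eq : forall g x, ap f (ap (epsi A g) x) = ap (epsi B g) (ap f x)).
  { intros g.
    assert (K : @Heq (FGrAct S) _ _
      (@comp (FGrAct S) _ _ _ (fmap (ShiftF S g) f) (epsi A g))
      (@comp (FGrAct S) _ _ _ (epsi B g) f)).
    { apply Fa. apply heqE. intros y. rewrite !ap_fmap_comp.
      rewrite (@shc_ap' G S T F H g _ _ f).
      rewrite Hf'.
      rewrite <- psiF_ap.
      transitivity (tr (f_equal Car (eq_sym (shc H g B)))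
                       (ap (epsi (EqF_ob H B) g) (ap m y))).
      { f_equal. exact (eh_eq m g y). }
      simpl. rewrite psiF_ap. etransitivity; [apply tr_sym|]. f_equal. symmetry. apply Hf'. }
    intros x. apply K. }
  exists (@Build_EqHom G S A B f Eq). intros y. apply Hf.
Qed.

Lemma EqF_esurj (G : Group) (S T : GrSemigroup G) (F : Functor (FGrAct S) (FGrAct T))
  (H : graded_functor F) : faithful F -> full F -> esurj F -> esurj (EqF H).
Proof.
  intros Fa Fu Fe B.
  destruct (Fe (eo B)) as [A0 (i & j & Hji & Hij)].
  assert (Hji' : forall y, ap j (ap i y) = y) by (intros y; exact (Hji y)).
  assert (Hij' : forall y, ap i (ap j y) = y) by (intros y; exact (Hij y)).
  pose (kap := fun g => @hom_cast (FGrAct T) _ _ _ _ eq_refl (eq_sym (shc H g A0))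
      (@comp (FGrAct T) _ _ _ (fmap (ShiftF T g) j) (@comp (FGrAct T) _ _ _ (epsi B g) i))).
  pose (psi := fun g => proj1_sig (cidT (Fu A0 (shiftOb g A0) (kap g)))).
  assert (Hpsi : forall g, @Heq (FGrAct T) _ _ (fmap F (psi g)) (kap g)).
  { intros g. exact (proj2_sig (cidT (Fu A0 (shiftOb g A0) (kap g)))). }
  assert (key : forall g y, ap (fmap F (psi g)) y =
     tr (f_equal Car (eq_sym (shc H g A0))) (ap j (ap (epsi B g) (ap i y)))).
  { intros g y. rewrite (proj1 (heqE _ _) (Hpsi g) y). unfold kap. rewrite ap_cast.
    reflexivity. }
  assert (key2 : forall g y, ap (psiF H (psi g)) y = ap j (ap (epsi B g) (ap i y))).
  { intros g y. rewrite psiF_ap, key. apply tr_sym. }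
  assert (Pc : forall g h x, ap (psi h) (ap (psi g) x) = ap (psi (gmul g h)) x).
  { intros g h.
    pose (E := shiftOb_shiftOb g h A0).
    assert (K : @Heq (FGrAct S) _ _
      (@hom_cast (FGrAct S) _ _ _ _ eq_refl E
         (@comp (FGrAct S) _ _ _ (fmap (ShiftF S g) (psi h)) (psi g)))
      (psi (gmul g h))).
    { apply Fa. apply heqE. intros y.
      rewrite fmap_cast, ap_cast, ap_fmap_comp. simpl.
      rewrite (@shc_ap' G S T F H g _ _ (psi h)).
      rewrite !key. rewrite tr_sym, Hij', epsi_comp.
      symmetry. apply tr_3. }
    intros x. pose proof (proj1 (heqE _ _) K x) as K2.
    rewrite ap_cast, tr_id in K2. exact K2. }
  assert (P1 : forall x, ap (psi gone) x = x).
  { assert (K : @Heq (FGrAct S) _ _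
      (@hom_cast (FGrAct S) _ _ _ _ eq_refl (shiftOb_one A0) (psi gone))
      (@idm (FGrAct S) A0)).
    { apply Fa. apply heqE. intros y.
      rewrite fmap_cast, ap_cast, ap_fmap_id. simpl. rewrite key, epsi_one, Hji'.
      apply tr_sym. }
    intros x. pose proof (proj1 (heqE _ _) K x) as K2.
    rewrite ap_cast, tr_id in K2. exact K2. }
  exists (@Build_EqOb G S A0 psi Pc P1).
  assert (Ei : forall g y, ap i (ap (psiF H (psi g)) y) = ap (epsi B g) (ap i y)).
  { intros g y. rewrite key2, Hij'. reflexivity. }
  assert (Ej : forall g z, ap j (ap (epsi B g) z) = ap (psiF H (psi g)) (ap j z)).
  { intros g z. rewrite key2, Hij'. reflexivity. }
  exists (@Build_EqHom G T (EqF_ob H (@Build_EqOb G S A0 psi Pc P1)) B i Ei).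
  exists (@Build_EqHom G T B (EqF_ob H (@Build_EqOb G S A0 psi Pc P1)) j Ej).
  split; intros y; simpl; [apply Hji' | apply Hij'].
Qed.

Lemma EqF_ffes (G : Group) (S T : GrSemigroup G) (F : Functor (FGrAct S) (FGrAct T))
  (H : graded_functor F) : ffes F -> ffes (EqF H).
Proof.
  intros (Fa & Fu & Fe). split; [|split].
  - apply EqF_faithful, Fa.
  - apply EqF_full; assumption.
  - apply EqF_esurj; assumption.
Qed.


Lemma act_z (S : SemigroupZ) (X : SAct S) (s : S) : act s (@act_zero S X) = act_zero.
Proof.
  rewrite <- (act0 (@act_zero S X)) at 1. rewrite <- actA, smul0r, act0. reflexivity.
Qed.

Lemma smap_z (S : SemigroupZ) (X Y : SAct S) (f : SMap X Y) : f act_zero = act_zero.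
Proof.
  rewrite <- (act0 (@act_zero S X)), smap_act, act0. reflexivity.
Qed.

Lemma tens_value (S : SemigroupZ) (X : SAct S) (p q : S * X) :
  tens_equiv p q -> act (fst p) (snd p) = act (fst q) (snd q).
Proof.
  induction 1 as [p q [s [t [x [-> ->]]]] | | |]; simpl; try congruence.
  apply actA.
Qed.

Lemma act_nz_l (S : SemigroupZ) (X : SAct S) (s : S) (x : X) :
  act s x <> act_zero -> s <> szero.
Proof. intros H E. apply H. rewrite E. apply act0. Qed.
Lemma act_nz_r (S : SemigroupZ) (X : SAct S) (s : S) (x : X) :
  act s x <> act_zero -> x <> act_zero.
Proof. intros H E. apply H. rewrite E. apply act_z. Qed.

Definition tcar (G : Group) (X : Type) (z : X) : Type :=
  {p : X * G | fst p = z -> snd p = gone}.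

Definition mkt (G : Group) (X : Type) (z : X) (x : X) (g : G) : tcar G z.
Proof.
  destruct (excluded_middle_informative (x = z)) as [H|H].
  - exact (exist (fun p : X * G => fst p = z -> snd p = gone) (z, gone) (fun _ => eq_refl)).
  - exact (exist (fun p : X * G => fst p = z -> snd p = gone) (x, g) (fun E => False_rect _ (H E))).
Defined.

Definition tfst (G : Group) (X : Type) (z : X) (t : tcar G z) : X := fst (proj1_sig t).
Definition tsnd (G : Group) (X : Type) (z : X) (t : tcar G z) : G := snd (proj1_sig t).
Definition tz (G : Group) (X : Type) (z : X) : tcar G z := @mkt G X z z gone.

Lemma t_ext (G : Group) (X : Type) (z : X) (a b : tcar G z) :
  tfst a = tfst b -> tsnd a = tsnd b -> a = b.
Proof.
  destruct a as [[x g] pa], b as [[y h] pb]. unfold tfst, tsnd. simpl. intros -> ->.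
  f_equal. apply proof_irrelevance.
Qed.

Lemma mkt_fst (G : Group) (X : Type) (z : X) x g : tfst (@mkt G X z x g) = x.
Proof. unfold mkt, tfst. destruct excluded_middle_informative; simpl; auto. Qed.
Lemma mkt_snd (G : Group) (X : Type) (z : X) x g : x <> z -> tsnd (@mkt G X z x g) = g.
Proof. unfold mkt, tsnd. destruct excluded_middle_informative; simpl; tauto. Qed.
Lemma tz_fst (G : Group) (X : Type) (z : X) : tfst (@tz G X z) = z.
Proof. apply mkt_fst. Qed.
Lemma tz_snd (G : Group) (X : Type) (z : X) : tsnd (@tz G X z) = gone.
Proof. unfold tz, mkt, tsnd. destruct excluded_middle_informative; simpl; tauto. Qed.
Lemma t_zero (G : Group) (X : Type) (z : X) (a : tcar G z) : tfst a = z -> a = @tz G X z.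
Proof.
  intros H. apply t_ext. rewrite tz_fst; exact H.
  rewrite tz_snd. destruct a as [[x g] pa]. unfold tfst, tsnd in *. simpl in *. auto.
Qed.
Lemma mkt_zero (G : Group) (X : Type) (z : X) x g : x = z -> @mkt G X z x g = @tz G X z.
Proof. intros H. apply t_zero. rewrite mkt_fst. exact H. Qed.
Lemma t_eta (G : Group) (X : Type) (z : X) (a : tcar G z) : @mkt G X z (tfst a) (tsnd a) = a.
Proof.
  destruct (excluded_middle_informative (tfst a = z)) as [H|H].
  - rewrite mkt_zero by exact H. symmetry. apply t_zero, H.
  - apply t_ext. apply mkt_fst. apply mkt_snd, H.
Qed.
Lemma t_nz (G : Group) (X : Type) (z : X) (a : tcar G z) : tfst a <> z -> a <> @tz G X z.
Proof. intros H E. apply H. rewrite E. apply tz_fst. Qed.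

Definition TC (G : Group) (S : GrSemigroup G) (X : SAct S) : Type := tcar G (@act_zero S X).
Definition TZ (G : Group) (S : GrSemigroup G) (X : SAct S) : TC X := @tz G X act_zero.
Definition MK (G : Group) (S : GrSemigroup G) (X : SAct S) (x : X) (g : G) : TC X :=
  @mkt G X act_zero x g.
Definition tact (G : Group) (S : GrSemigroup G) (X : SAct S) (s : S) (t : TC X) : TC X :=
  MK (act s (tfst t)) (gmul (gs_deg s) (tsnd t)).

Lemma MK_zero (G : Group) (S : GrSemigroup G) (X : SAct S) (x : X) g :
  x = act_zero -> MK x g = TZ X.
Proof. apply mkt_zero. Qed.
Lemma MK_fst (G : Group) (S : GrSemigroup G) (X : SAct S) (x : X) g : tfst (MK x g) = x.
Proof. apply mkt_fst. Qed.
Lemma MK_snd (G : Group) (S : GrSemigroup G) (X : SAct S) (x : X) g :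
  x <> act_zero -> tsnd (MK x g) = g.
Proof. apply mkt_snd. Qed.
Lemma MK_eq (G : Group) (S : GrSemigroup G) (X : SAct S) (x y : X) g h :
  x = y -> g = h -> MK x g = MK y h.
Proof. intros -> ->. reflexivity. Qed.
Lemma MK_eta (G : Group) (S : GrSemigroup G) (X : SAct S) (t : TC X) : MK (tfst t) (tsnd t) = t.
Proof. apply t_eta. Qed.
Lemma TZ_fst (G : Group) (S : GrSemigroup G) (X : SAct S) : tfst (TZ X) = act_zero.
Proof. apply tz_fst. Qed.
Lemma T_zero (G : Group) (S : GrSemigroup G) (X : SAct S) (t : TC X) :
  tfst t = act_zero -> t = TZ X.
Proof. apply t_zero. Qed.

Lemma tact_A (G : Group) (S : GrSemigroup G) (X : SAct S) (s t : S) (x : TC X) :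
  tact (smul s t) x = tact s (tact t x).
Proof.
  unfold tact. rewrite MK_fst.
  destruct (excluded_middle_informative (act s (act t (tfst x)) = act_zero)) as [H|H].
  - rewrite !MK_zero; auto. rewrite actA; exact H.
  - rewrite MK_snd by (apply act_nz_r in H; exact H).
    apply MK_eq. apply actA.
    rewrite gs_degM. symmetry; apply gmulA.
    rewrite <- actA in H. apply act_nz_l in H. exact H.
Qed.

Lemma tact_0 (G : Group) (S : GrSemigroup G) (X : SAct S) (x : TC X) :
  tact szero x = TZ X.
Proof. unfold tact. apply MK_zero. apply act0. Qed.

Lemma tact_TZ (G : Group) (S : GrSemigroup G) (X : SAct S) (s : S) :
  tact s (TZ X) = TZ X.
Proof. unfold tact. apply MK_zero. rewrite TZ_fst. apply act_z. Qed.

Lemma tact_fst (G : Group) (S : GrSemigroup G) (X : SAct S) (s : S) (x : TC X) :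
  tfst (tact s x) = act s (tfst x).
Proof. apply MK_fst. Qed.

Lemma tact_snd (G : Group) (S : GrSemigroup G) (X : SAct S) (s : S) (x : TC X) :
  act s (tfst x) <> act_zero -> tsnd (tact s x) = gmul (gs_deg s) (tsnd x).
Proof. intros H. apply MK_snd, H. Qed.

Lemma tact_unital (G : Group) (S : GrSemigroup G) (X : SAct S) (x : TC X) :
  exists (s : S) (y : TC X), tact s y = x.
Proof.
  destruct (act_unital (tfst x)) as [s [y Hy]].
  destruct (excluded_middle_informative (tfst x = act_zero)) as [H|H].
  - exists szero, x. rewrite tact_0. symmetry. apply T_zero, H.
  - exists s, (MK y (gmul (ginv (gs_deg s)) (tsnd x))).
    unfold tact. rewrite <- (MK_eta x) at 3. apply MK_eq.
    rewrite MK_fst. exact Hy.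
    rewrite MK_snd. apply gKV.
    intros E. apply H. rewrite <- Hy, E. apply act_z.
Qed.

Definition tSAct (G : Group) (S : GrSemigroup G) (X : SAct S) : SAct S :=
  {| act_car := TC X; act_zero := TZ X; act := @tact G S X;
     actA := @tact_A G S X; act0 := @tact_0 G S X; act_unital := @tact_unital G S X |}.

Lemma tdegM (G : Group) (S : GrSemigroup G) (X : SAct S) :
  forall (s : S) (x : tSAct X), act s x <> act_zero ->
    tsnd (act s x) = gmul (gs_deg s) (tsnd x).
Proof.
  intros s x H. simpl in *. apply tact_snd. intros E. apply H.
  apply T_zero. rewrite tact_fst. exact E.
Qed.

Definition tGr (G : Group) (S : GrSemigroup G) (X : SAct S) : GrSAct S :=
  {| gact := tSAct X; gact_deg := fun x : tSAct X => tsnd x; gact_degM := @tdegM G S X |}.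

Definition Lft (G : Group) (S : GrSemigroup G) (X : SAct S) (p : S * X) (q : S * tSAct X)
  : Prop := fst q = fst p /\ tfst (snd q) = snd p.

Lemma lift_step (G : Group) (S : GrSemigroup G) (X : SAct S) (p q : S * X) :
  tens_step p q ->
  (forall p', Lft p p' -> exists q', Lft q q' /\ tens_step p' q') /\
  (forall q', Lft q q' -> exists p', Lft p p' /\ tens_step p' q').
Proof.
  intros [s [t [x [-> ->]]]]. split.
  - intros [s0 x0] [H1 H2]. simpl in *. subst.
    exists (s, tact t x0). split. split; simpl; auto. apply tact_fst.
    exists s, t, x0. auto.
  - intros [s0 y0] [H1 H2]. simpl in *. subst.
    exists (smul s t, MK x (gmul (ginv (gs_deg t)) (tsnd y0))).
    split. split; simpl; auto. apply MK_fst.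
    exists s, t, (MK x (gmul (ginv (gs_deg t)) (tsnd y0))). split; auto.
    f_equal. simpl.
    destruct (excluded_middle_informative (act t x = act_zero)) as [H|H].
    + unfold tact. rewrite MK_fst, MK_zero by exact H. apply T_zero. rewrite H2. exact H.
    + unfold tact. rewrite MK_fst, MK_snd by (apply act_nz_r in H; exact H).
      rewrite gKV, <- H2. symmetry. apply MK_eta.
Qed.

Lemma lift_chain (G : Group) (S : GrSemigroup G) (X : SAct S) (p q : S * X) :
  tens_equiv p q ->
  (forall p', Lft p p' -> exists q', Lft q q' /\ tens_equiv p' q') /\
  (forall q', Lft q q' -> exists p', Lft p p' /\ tens_equiv p' q').
Proof.
  induction 1 as [p q Hs | p | p q _ [IH1 IH2] | p q r _ [IH1 IH2] _ [IH3 IH4]].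
  - destruct (lift_step Hs) as [A B]. split.
    + intros p' Hp. destruct (A p' Hp) as [q' [H1 H2]]. exists q'. split; auto.
      apply rst_step, H2.
    + intros q' Hq. destruct (B q' Hq) as [p' [H1 H2]]. exists p'. split; auto.
      apply rst_step, H2.
  - split; intros p' H; exists p'; split; auto; apply rst_refl.
  - split.
    + intros p' H. destruct (IH2 p' H) as [q' [H1 H2]]. exists q'. split; auto.
      apply rst_sym, H2.
    + intros q' H. destruct (IH1 q' H) as [p' [H1 H2]]. exists p'. split; auto.
      apply rst_sym, H2.
  - split.
    + intros p' H. destruct (IH1 p' H) as [q' [H1 H2]]. destruct (IH3 q' H1) as [r' [H3 H4]].
      exists r'. split; auto. eapply rst_trans; eauto.
    + intros r' H. destruct (IH4 r' H) as [q' [H1 H2]]. destruct (IH2 q' H1) as [p' [H3 H4]].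
      exists p'. split; auto. eapply rst_trans; eauto.
Qed.

Lemma t_closed (G : Group) (S : GrSemigroup G) (X : SAct S) :
  closed_act X -> closed_act (tSAct X).
Proof.
  intros [Hs Hi]. split.
  - intros x. destruct (tact_unital x) as [s [y H]]. exists (s, y). exact H.
  - assert (Z : forall p : S * tSAct X, act (fst p) (snd p) = act_zero ->
              tens_equiv p (@szero S, TZ X)).
    { intros [s x] H. simpl in H.
      assert (H' : act s (tfst x) = act (fst (@szero S, @act_zero _ X)) (snd (@szero S, @act_zero _ X))).
      { simpl. rewrite act0. rewrite <- tact_fst, H. apply TZ_fst. }
      destruct (proj1 (lift_chain (Hi (s, tfst x) (@szero S, @act_zero _ X) H')) (s, x)) as [[s' x'] [[H1 H2] H3]].
      split; auto.
      simpl in *. subst. rewrite (T_zero H2) in H3. exact H3. }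
    intros [s x] [s' x'] H. simpl in H.
    destruct (excluded_middle_informative (act s x = @act_zero _ (tSAct X))) as [E|E].
    + eapply rst_trans. apply (Z (s, x) E). apply rst_sym. apply Z. simpl. rewrite <- H. exact E.
    + assert (H' : act (fst (s, tfst x)) (snd (s, tfst x)) = act (fst (s', tfst x')) (snd (s', tfst x'))).
      { simpl. rewrite <- !tact_fst. simpl in H. rewrite H. reflexivity. }
      destruct (proj1 (lift_chain (Hi _ _ H')) (s, x)) as [[s2 x2] [[H1 H2] H3]].
      split; auto. simpl in *. subst s2.
      pose proof (tens_value H3) as V. simpl in V.
      assert (x2 = x').
      { apply t_ext. exact H2.
        assert (E2 : @act S (tSAct X) s' x2 <> act_zero) by (simpl; rewrite <- V; exact E).
        assert (E3 : @act S (tSAct X) s' x' <> act_zero) by (simpl; rewrite <- H; exact E).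
        apply (gcancel_l (a := gs_deg s')).
        rewrite <- (tdegM E2), <- (tdegM E3). simpl. rewrite <- V, <- H. reflexivity. }
      subst x2. exact H3.
Qed.

Definition tOb (G : Group) (S : GrSemigroup G) (X : FActOb S) : FGrActOb S :=
  {| fg_act := tGr X; fg_closed := t_closed (fa_closed X) |}.

Definition mkHom (G : Group) (S : GrSemigroup G) (X Y : FGrActOb S) (f : Car X -> Car Y)
  (Ha : forall (s : S) x, f (act s x) = act s (f x))
  (Hd : forall a x, homog a x -> homog a (f x)) : @Hom (FGrAct S) X Y :=
  @Build_GrSMap G S X Y (@Build_SMap S X Y f Ha) Hd.

Lemma ap_mkHom (G : Group) (S : GrSemigroup G) (X Y : FGrActOb S) f Ha Hd x :
  ap (@mkHom G S X Y f Ha Hd) x = f x.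
Proof. reflexivity. Qed.

Lemma tmap_act (G : Group) (S : GrSemigroup G) (X Y : SAct S) (h : SMap X Y) (k : G -> G)
  (Hk : forall (s : S) g, k (gmul (gs_deg s) g) = gmul (gs_deg s) (k g)) :
  forall (s : S) (x : TC X),
    MK (h (tfst (tact s x))) (k (tsnd (tact s x))) = tact s (MK (h (tfst x)) (k (tsnd x))).
Proof.
  intros s x.
  destruct (excluded_middle_informative (act s (tfst x) = act_zero)) as [E|E].
  - rewrite tact_fst, E, smap_z. rewrite MK_zero by reflexivity.
    unfold tact. rewrite MK_fst. symmetry. apply MK_zero.
    rewrite <- smap_act, E. apply smap_z.
  - rewrite tact_fst, (tact_snd E). unfold tact. rewrite MK_fst.
    destruct (excluded_middle_informative (h (tfst x) = act_zero)) as [E2|E2].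
    + rewrite MK_zero. symmetry. apply MK_zero. rewrite E2. apply act_z.
      rewrite smap_act, E2. apply act_z.
    + rewrite MK_snd by exact E2. apply MK_eq. apply smap_act. apply Hk.
Qed.

Definition idSMap (S : SemigroupZ) (X : SAct S) : SMap X X :=
  {| smap := fun x => x; smap_act := fun s x => eq_refl |}.

Lemma phi_act (G : Group) (S : GrSemigroup G) (X : FActOb S) g :
  forall (s : S) (x : TC X), (fun x : TC X => MK (tfst x) (gmul (tsnd x) g)) (tact s x) =
    tact s ((fun x : TC X => MK (tfst x) (gmul (tsnd x) g)) x).
Proof.
  intros s x. apply (tmap_act (k := fun z => gmul z g) (idSMap X)). intros. symmetry. apply gmulA.
Qed.

Lemma phi_deg (G : Group) (S : GrSemigroup G) (X : FActOb S) g :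
  forall a (x : tOb X), homog a x ->
    @homog G S (shift_gr g (tGr X)) a (MK (tfst x) (gmul (tsnd x) g)).
Proof.
  intros a x [H|H]; unfold homog in *; simpl in *.
  - left. apply MK_zero. rewrite H. apply TZ_fst.
  - destruct (excluded_middle_informative (tfst x = act_zero)) as [E|E].
    + left. apply MK_zero, E.
    + right. rewrite MK_snd by exact E. rewrite H. apply gMVK.
Qed.

Definition phi (G : Group) (S : GrSemigroup G) (X : FActOb S) g :
  @Hom (FGrAct S) (tOb X) (shiftOb g (tOb X)) :=
  @mkHom G S (tOb X) (shiftOb g (tOb X)) _ (@phi_act G S X g) (@phi_deg G S X g).

Lemma phi_ap (G : Group) (S : GrSemigroup G) (X : FActOb S) g (x : Car (tOb X)) :
  ap (phi X g) x = MK (tfst x) (gmul (tsnd x) g).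
Proof. reflexivity. Qed.

Lemma phi_comp (G : Group) (S : GrSemigroup G) (X : FActOb S) g h (x : Car (tOb X)) :
  ap (phi X h) (ap (phi X g) x) = ap (phi X (gmul g h)) x.
Proof.
  rewrite !phi_ap, MK_fst.
  destruct (excluded_middle_informative (tfst x = act_zero)) as [E|E].
  - rewrite !MK_zero by exact E. reflexivity.
  - rewrite MK_snd by exact E. apply MK_eq; auto. symmetry; apply gmulA.
Qed.

Lemma phi_one (G : Group) (S : GrSemigroup G) (X : FActOb S) (x : Car (tOb X)) :
  ap (phi X gone) x = x.
Proof. rewrite phi_ap, gmul1r. apply MK_eta. Qed.

Definition IndOb (G : Group) (S : GrSemigroup G) (X : FActOb S) : EqOb S :=
  {| eo := tOb X; epsi := phi X; epsi_comp := @phi_comp G S X; epsi_one := @phi_one G S X |}.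

Lemma tmap_deg (G : Group) (S : GrSemigroup G) (X Y : FActOb S) (f : SMap X Y) :
  forall a (x : tOb X), homog a x -> @homog G S (tOb Y) a (MK (f (tfst x)) (tsnd x)).
Proof.
  intros a x [H|H]; unfold homog in *; simpl in *.
  - left. apply MK_zero. rewrite H, TZ_fst. apply smap_z.
  - destruct (excluded_middle_informative (f (tfst x) = act_zero)) as [E|E].
    + left. apply MK_zero, E.
    + right. rewrite MK_snd by exact E. exact H.
Qed.

Lemma tmap_act' (G : Group) (S : GrSemigroup G) (X Y : FActOb S) (f : SMap X Y) :
  forall (s : S) (x : TC X), (fun x : TC X => MK (f (tfst x)) (tsnd x)) (tact s x) =
    tact s ((fun x : TC X => MK (f (tfst x)) (tsnd x)) x).
Proof. intros s x. apply (tmap_act (k := fun z => z) f). reflexivity. Qed.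

Definition tmap (G : Group) (S : GrSemigroup G) (X Y : FActOb S) (f : SMap X Y) :
  @Hom (FGrAct S) (tOb X) (tOb Y) :=
  @mkHom G S (tOb X) (tOb Y) _ (@tmap_act' G S X Y f) (@tmap_deg G S X Y f).

Lemma tmap_ap (G : Group) (S : GrSemigroup G) (X Y : FActOb S) (f : SMap X Y) x :
  ap (tmap f) x = MK (f (tfst x)) (tsnd x).
Proof. reflexivity. Qed.

Lemma tmap_eq (G : Group) (S : GrSemigroup G) (X Y : FActOb S) (f : SMap X Y) :
  forall g x, ap (tmap f) (ap (epsi (IndOb X) g) x) = ap (epsi (IndOb Y) g) (ap (tmap f) x).
Proof.
  intros g x. simpl. rewrite tmap_ap, !phi_ap, tmap_ap, !MK_fst.
  destruct (excluded_middle_informative (tfst x = act_zero)) as [E|E].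
  - rewrite E, smap_z, !MK_zero; reflexivity.
  - rewrite (MK_snd _ E).
    destruct (excluded_middle_informative (f (tfst x) = act_zero)) as [E2|E2].
    + rewrite !MK_zero by exact E2. reflexivity.
    + rewrite (MK_snd _ E2). reflexivity.
Qed.

Definition Ind (G : Group) (S : GrSemigroup G) : Functor (FAct S) (EqCat S).
Proof.
  refine {| fobj := fun X : FAct S => (IndOb X : EqCat S);
            fmap := fun (X Y : FAct S) (f : Hom X Y) =>
              (@Build_EqHom G S (IndOb X) (IndOb Y) (tmap f) (@tmap_eq G S X Y f)
                 : @Hom (EqCat S) _ _) |}.
  - intros X Y f g H x. simpl. rewrite !tmap_ap. apply MK_eq. apply H. reflexivity.
  - intros X x. simpl. rewrite tmap_ap. apply MK_eta.
  - intros X Y Z g f x.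
    change (ap (tmap (@comp (FAct S) X Y Z g f)) x = ap (tmap g) (ap (tmap f) x)).
    rewrite !tmap_ap, MK_fst. cbn [smap FAct comp].
    destruct (excluded_middle_informative (f (tfst x) = act_zero)) as [E|E].
    + rewrite (MK_zero _ E). rewrite !MK_zero; [reflexivity | |]; rewrite E; apply smap_z.
    + rewrite (MK_snd _ E). reflexivity.
Defined.

Lemma Ind_faithful (G : Group) (S : GrSemigroup G) : faithful (Ind S).
Proof.
  intros X Y f g H x.
  destruct (excluded_middle_informative (x = act_zero)) as [E|E].
  - subst. rewrite !smap_z. reflexivity.
  - pose proof (H (MK x gone)) as K. simpl in K.
    change (ap (tmap f) (MK x gone) = ap (tmap g) (MK x gone)) in K.
    rewrite !tmap_ap in K. apply (f_equal (@tfst _ _ _)) in K. rewrite !MK_fst in K. exact K.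
Qed.

Lemma Ind_full (G : Group) (S : GrSemigroup G) : full (Ind S).
Proof.
  intros X Y m.
  assert (L1 : forall y k, tfst (ap (eh m) (MK y k)) = tfst (ap (eh m) (MK (X:=X) y gone))).
  { intros y k.
    assert (E : MK (X:=X) y k = ap (phi X k) (MK y gone)).
    { rewrite phi_ap, MK_fst.
      destruct (excluded_middle_informative (y = act_zero)) as [Z|Z].
      - rewrite !MK_zero by exact Z. reflexivity.
      - rewrite MK_snd by exact Z. rewrite gmul1l. reflexivity. }
    rewrite E. pose proof (eh_eq m k (MK y gone)) as K. simpl in K.
    change (ap (eh m) (ap (phi X k) (MK y gone)) = ap (phi Y k) (ap (eh m) (MK y gone))) in K.
    rewrite K, phi_ap, MK_fst. reflexivity. }
  pose (fm := fun x : X => tfst (ap (eh m) (MK x gone))).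
  assert (Hfm : forall (s : S) x, fm (act s x) = act s (fm x)).
  { intros s x. unfold fm. rewrite <- (L1 _ (gmul (gs_deg s) gone)).
    assert (E : MK (X:=X) (act s x) (gmul (gs_deg s) gone) = tact s (MK x gone)).
    { unfold tact. rewrite MK_fst.
      destruct (excluded_middle_informative (x = act_zero)) as [Z|Z].
      - rewrite !MK_zero; auto; rewrite Z; apply act_z.
      - rewrite MK_snd by exact Z. reflexivity. }
    rewrite E. pose proof (smap_act (gsmap (eh m)) s (MK x gone)) as K.
    change (ap (eh m) (tact s (MK x gone)) = tact s (ap (eh m) (MK x gone))) in K.
    rewrite K. apply tact_fst. }
  exists (@Build_SMap S X Y fm Hfm).
  intros x. simpl.
  change (ap (tmap (@Build_SMap S X Y fm Hfm)) x = ap (eh m) x).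
  rewrite tmap_ap. simpl.
  set (y := tfst x). set (k := tsnd x).
  assert (Ex : x = ap (phi X k) (MK y gone)).
  { rewrite phi_ap, MK_fst.
    destruct (excluded_middle_informative (y = act_zero)) as [Z|Z].
    - rewrite MK_zero by exact Z. apply T_zero, Z.
    - rewrite MK_snd by exact Z. rewrite gmul1l. symmetry. apply MK_eta. }
  rewrite Ex. pose proof (eh_eq m k (MK y gone)) as K. simpl in K.
  change (ap (eh m) (ap (phi X k) (MK y gone)) = ap (phi Y k) (ap (eh m) (MK y gone))) in K.
  transitivity (ap (phi Y k) (ap (eh m) (MK y gone))); [| symmetry; exact K]. rewrite phi_ap. unfold fm.
  pose proof (gsmap_deg (eh m) (a := gone) (x := MK y gone)) as D.
  destruct D as [D|D].
  - destruct (excluded_middle_informative (y = act_zero)) as [Z|Z].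
    + left. apply MK_zero, Z.
    + right. simpl. apply MK_snd, Z.
  - simpl in D. change (ap (eh m) (MK y gone) = TZ Y) in D. rewrite D, TZ_fst.
    rewrite !MK_zero; reflexivity.
  - simpl in D. change (tsnd (ap (eh m) (MK y gone)) = gone) in D. rewrite D, gmul1l.
    reflexivity.
Qed.


Definition ps (G : Group) (S : GrSemigroup G) (A : EqOb S) (g : G) (x : Car A) : Car A :=
  ap (epsi A g) x.
Definition dg (G : Group) (S : GrSemigroup G) (A : EqOb S) (x : Car A) : G :=
  @gact_deg G S (fg_act (eo A)) x.
Definition Z0 (G : Group) (S : GrSemigroup G) (A : EqOb S) : Car A :=
  @act_zero S (gact (fg_act (eo A))).
Definition ac (G : Group) (S : GrSemigroup G) (A : EqOb S) (s : S) (x : Car A) : Car A :=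
  @act S (gact (fg_act (eo A))) s x.
Arguments ps {G S} A g x.
Arguments dg {G S} A x.
Arguments ac {G S} A s x.

Lemma ps_z (G : Group) (S : GrSemigroup G) (A : EqOb S) g : ps A g (Z0 A) = Z0 A.
Proof. apply (smap_z (gsmap (epsi A g))). Qed.
Lemma ps_act (G : Group) (S : GrSemigroup G) (A : EqOb S) g s x :
  ps A g (ac A s x) = ac A s (ps A g x).
Proof. apply (smap_act (gsmap (epsi A g))). Qed.
Lemma ps_comp (G : Group) (S : GrSemigroup G) (A : EqOb S) g h x :
  ps A h (ps A g x) = ps A (gmul g h) x.
Proof. apply epsi_comp. Qed.
Lemma ps_one (G : Group) (S : GrSemigroup G) (A : EqOb S) x : ps A gone x = x.
Proof. apply epsi_one. Qed.
Lemma ps_inj (G : Group) (S : GrSemigroup G) (A : EqOb S) g x y :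
  ps A g x = ps A g y -> x = y.
Proof.
  intros H. apply (f_equal (ps A (ginv g))) in H. rewrite !ps_comp, gmulVr, !ps_one in H.
  exact H.
Qed.
Lemma ps_nz (G : Group) (S : GrSemigroup G) (A : EqOb S) g x :
  x <> Z0 A -> ps A g x <> Z0 A.
Proof. intros H E. apply H. apply (ps_inj (g := g)). rewrite E, ps_z. reflexivity. Qed.
Lemma ps_deg (G : Group) (S : GrSemigroup G) (A : EqOb S) g x :
  x <> Z0 A -> dg A (ps A g x) = gmul (dg A x) g.
Proof.
  intros H.
  destruct (gsmap_deg (epsi A g) (a := dg A x) (x := x) (or_intror eq_refl)) as [E|E].
  - exfalso. apply (ps_nz (g:=g) H). exact E.
  - change (gmul (dg A (ps A g x)) (ginv g) = dg A x) in E. rewrite <- E. symmetry. apply gMKV.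
Qed.
Lemma ac_z (G : Group) (S : GrSemigroup G) (A : EqOb S) s : ac A s (Z0 A) = Z0 A.
Proof. apply act_z. Qed.
Lemma ac_deg (G : Group) (S : GrSemigroup G) (A : EqOb S) s x :
  ac A s x <> Z0 A -> dg A (ac A s x) = gmul (gs_deg s) (dg A x).
Proof. apply gact_degM. Qed.
Lemma ac_A (G : Group) (S : GrSemigroup G) (A : EqOb S) s t x :
  ac A (smul s t) x = ac A s (ac A t x).
Proof. apply actA. Qed.
Lemma ac_0 (G : Group) (S : GrSemigroup G) (A : EqOb S) x : ac A szero x = Z0 A.
Proof. apply act0. Qed.

Definition hE (G : Group) (S : GrSemigroup G) (A : EqOb S) (x : Car A) : Prop :=
  x = Z0 A \/ dg A x = gone.
Definition AeC (G : Group) (S : GrSemigroup G) (A : EqOb S) : Type := {x : Car A | hE x}.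
Arguments AeC {G S} A.

Lemma ae_ext (G : Group) (S : GrSemigroup G) (A : EqOb S) (a b : AeC A) :
  proj1_sig a = proj1_sig b -> a = b.
Proof.
  destruct a as [a pa], b as [b pb]. simpl. intros ->. f_equal. apply proof_irrelevance.
Qed.

Lemma hE_ract (G : Group) (S : GrSemigroup G) (A : EqOb S) (s : S) (a : AeC A) :
  hE (ps A (ginv (gs_deg s)) (ac A s (proj1_sig a))).
Proof.
  destruct (excluded_middle_informative (ac A s (proj1_sig a) = Z0 A)) as [E|E].
  - left. rewrite E. apply ps_z.
  - right. rewrite ps_deg by exact E. rewrite ac_deg by exact E.
    destruct (proj2_sig a) as [Z|Z].
    + exfalso. apply E. rewrite Z. apply ac_z.
    + rewrite Z, gmul1r, gmulVr. reflexivity.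
Qed.

Definition ract (G : Group) (S : GrSemigroup G) (A : EqOb S) (s : S) (a : AeC A) : AeC A :=
  exist _ _ (hE_ract s a).
Definition aez (G : Group) (S : GrSemigroup G) (A : EqOb S) : AeC A :=
  exist (@hE G S A) (Z0 A) (or_introl eq_refl).
Arguments aez {G S} A.

Lemma ract_val (G : Group) (S : GrSemigroup G) (A : EqOb S) s a :
  proj1_sig (ract s a) = ps A (ginv (gs_deg s)) (ac A s (proj1_sig a)).
Proof. reflexivity. Qed.

Lemma ract_A (G : Group) (S : GrSemigroup G) (A : EqOb S) (s t : S) (a : AeC A) :
  ract (smul s t) a = ract s (ract t a).
Proof.
  apply ae_ext. rewrite !ract_val, <- ps_act, ps_comp, <- ac_A.
  destruct (excluded_middle_informative (ac A (smul s t) (proj1_sig a) = Z0 A)) as [E|E].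
  - rewrite E, !ps_z. reflexivity.
  - rewrite gs_degM, ginv_mul. reflexivity.
    intros Z. apply E. rewrite Z. apply ac_0.
Qed.

Lemma ract_0 (G : Group) (S : GrSemigroup G) (A : EqOb S) (a : AeC A) :
  ract szero a = aez A.
Proof. apply ae_ext. rewrite ract_val, ac_0, ps_z. reflexivity. Qed.

Definition Mf (G : Group) (S : GrSemigroup G) (A : EqOb S) (y : Car A) : AeC A.
Proof.
  refine (exist _ (ps A (ginv (dg A y)) y) _).
  destruct (excluded_middle_informative (y = Z0 A)) as [E|E].
  - left. rewrite E. apply ps_z.
  - right. rewrite ps_deg by exact E. apply gmulVr.
Defined.
Arguments Mf {G S} A y.

Lemma Mf_val (G : Group) (S : GrSemigroup G) (A : EqOb S) y :
  proj1_sig (Mf A y) = ps A (ginv (dg A y)) y.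
Proof. reflexivity. Qed.

Lemma Mf_step (G : Group) (S : GrSemigroup G) (A : EqOb S) (t : S) y :
  Mf A (ac A t y) = ract t (Mf A y).
Proof.
  apply ae_ext. rewrite Mf_val, ract_val, Mf_val, <- ps_act, ps_comp.
  destruct (excluded_middle_informative (ac A t y = Z0 A)) as [E|E].
  - rewrite E, !ps_z. reflexivity.
  - rewrite ac_deg by exact E. rewrite ginv_mul. reflexivity.
Qed.

Lemma Mf_fix (G : Group) (S : GrSemigroup G) (A : EqOb S) (a : AeC A) :
  Mf A (proj1_sig a) = a.
Proof.
  apply ae_ext. rewrite Mf_val. destruct (proj2_sig a) as [E|E].
  - rewrite E, ps_z. reflexivity.
  - rewrite E, ginv_one, ps_one. reflexivity.
Qed.

Lemma ract_unital (G : Group) (S : GrSemigroup G) (A : EqOb S) (a : AeC A) :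
  exists (s : S) (b : AeC A), ract s b = a.
Proof.
  destruct (act_unital (proj1_sig a)) as [s [y Hy]].
  destruct (excluded_middle_informative (proj1_sig a = Z0 A)) as [E|E].
  - exists szero, a. rewrite ract_0. apply ae_ext. simpl. symmetry. exact E.
  - exists s, (Mf A y). rewrite <- Mf_step. apply ae_ext. rewrite Mf_val.
    change (ps A (ginv (dg A (ac A s y))) (ac A s y) = proj1_sig a).
    change (ac A s y = proj1_sig a) in Hy. rewrite Hy. destruct (proj2_sig a) as [Z|Z]. contradiction.
    rewrite Z, ginv_one, ps_one. reflexivity.
Qed.

Definition AeSAct (G : Group) (S : GrSemigroup G) (A : EqOb S) : SAct S :=
  {| act_car := AeC A; act_zero := aez A; act := @ract G S A;
     actA := @ract_A G S A; act0 := @ract_0 G S A; act_unital := @ract_unital G S A |}.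

Lemma Mf_chain (G : Group) (S : GrSemigroup G) (A : EqOb S)
  (p q : S * (gact (fg_act (eo A)))) :
  tens_equiv p q ->
  @tens_equiv S (AeSAct A) (fst p, Mf A (snd p)) (fst q, Mf A (snd q)).
Proof.
  induction 1 as [p q [s [t [x [-> ->]]]] | | |].
  - apply rst_step. exists s, t, (Mf A x). simpl. split; auto.
    f_equal. apply (@Mf_step G S A t x).
  - apply rst_refl.
  - apply rst_sym; auto.
  - eapply rst_trans; eauto.
Qed.

Lemma unit_deg (G : Group) (S : GrSemigroup G) (A : EqOb S) (u : S) x :
  idempotent u -> ac A u x <> Z0 A -> gs_deg u = gone.
Proof.
  intros Hu H. apply gidem. rewrite <- gs_degM. unfold idempotent in Hu. rewrite Hu. reflexivity.
  unfold idempotent in Hu. rewrite Hu. intros E. apply H. rewrite E. apply ac_0.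
Qed.

Lemma Ae_closed (G : Group) (S : GrSemigroup G) (A : EqOb S) :
  has_local_units S -> closed_act (AeSAct A).
Proof.
  intros LU. split.
  - intros a. destruct (ract_unital a) as [s [b H]]. exists (s, b). exact H.
  - assert (K : forall (s : S) (a : AeC A), exists u, idempotent u /\
               @tens_equiv S (AeSAct A) (s, a) (u, ract s a) /\ ract u (ract s a) = ract s a).
    { intros s a. destruct (LU s) as [u [v [Hu [Hv [Hus Hsv]]]]].
      exists u. split; auto. split.
      - rewrite <- Hus at 1. apply rst_step. exists u, s, a. auto.
      - rewrite <- ract_A, Hus. reflexivity. }
    assert (K2 : forall u u' (w : AeC A), idempotent u -> idempotent u' ->
        ract u w = w -> ract u' w = w -> @tens_equiv S (AeSAct A) (u, w) (u', w)).
    { intros u u' w Hu Hu' H1 H2.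
      assert (Fx : forall v, idempotent v -> ract v w = w -> ac A v (proj1_sig w) = proj1_sig w).
      { intros v Hv H.
        destruct (excluded_middle_informative (proj1_sig w = Z0 A)) as [E|E].
        - rewrite E. apply ac_z.
        - assert (E' : ac A v (proj1_sig w) <> Z0 A).
          { intros Z. apply E. rewrite <- H, ract_val, Z. apply ps_z. }
          pose proof (unit_deg Hv E') as D.
          apply (f_equal (@proj1_sig _ _)) in H. rewrite ract_val, D, ginv_one, ps_one in H.
          exact H. }
      pose proof (fa_closed (Build_FActOb (fg_closed (eo A)))) as [_ Hi].
      assert (V : ac A u (proj1_sig w) = ac A u' (proj1_sig w)).
      { rewrite (Fx u Hu H1), (Fx u' Hu' H2). reflexivity. }
      pose proof (Mf_chain (Hi (u, proj1_sig w) (u', proj1_sig w) V)) as C.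
      simpl in C. rewrite Mf_fix in C. exact C. }
    intros [s a] [s' a'] H. simpl in H.
    destruct (K s a) as [u [Hu [C1 E1]]]. destruct (K s' a') as [u' [Hu' [C2 E2]]].
    eapply rst_trans. exact C1. eapply rst_trans; [| apply rst_sym; exact C2].
    rewrite <- H. apply K2; auto. rewrite H. exact E2.
Qed.

Definition AeOb (G : Group) (S : GrSemigroup G) (A : EqOb S) (LU : has_local_units S)
  : FActOb S := {| fa_act := AeSAct A; fa_closed := Ae_closed A LU |}.

Lemma ract_zero_inv (G : Group) (S : GrSemigroup G) (A : EqOb S) s (a : AeC A) :
  ract s a = aez A -> ac A s (proj1_sig a) = Z0 A.
Proof.
  intros E. apply (f_equal (@proj1_sig _ _)) in E. rewrite ract_val in E. simpl in E.
  apply (ps_inj (g := ginv (gs_deg s))). rewrite E, ps_z. reflexivity.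
Qed.

Lemma aez_val (G : Group) (S : GrSemigroup G) (A : EqOb S) (a : AeC A) :
  proj1_sig a = Z0 A -> a = aez A.
Proof. intros E. apply ae_ext. exact E. Qed.

Definition alf (G : Group) (S : GrSemigroup G) (A : EqOb S) (LU : has_local_units S)
  (x : TC (AeSAct A)) : Car A := ps A (tsnd x) (proj1_sig (tfst x)).

Lemma alf_TZ (G : Group) (S : GrSemigroup G) (A : EqOb S) (LU : has_local_units S) :
  alf LU (TZ (AeSAct A)) = Z0 A.
Proof. unfold alf. rewrite TZ_fst. apply ps_z. Qed.

Lemma alf_act (G : Group) (S : GrSemigroup G) (A : EqOb S) (LU : has_local_units S) :
  forall (s : S) x, alf LU (tact s x) = ac A s (alf LU x).
Proof.
  intros s x. unfold alf at 2. rewrite <- ps_act.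
  destruct (excluded_middle_informative (ract s (tfst x) = aez A)) as [E|E].
  - unfold tact. rewrite MK_zero by exact E. rewrite alf_TZ.
    change (act s (tfst x)) with (ract s (tfst x)) in E.
    rewrite (ract_zero_inv E), ps_z. reflexivity.
  - unfold alf, tact. rewrite MK_fst, MK_snd by exact E.
    change (ps A (gmul (gs_deg s) (tsnd x)) (proj1_sig (ract s (tfst x))) =
            ps A (tsnd x) (ac A s (proj1_sig (tfst x)))).
    rewrite ract_val, ps_comp, gVK. reflexivity.
Qed.

Lemma alf_deg (G : Group) (S : GrSemigroup G) (A : EqOb S) (LU : has_local_units S) :
  forall h (x : TC (AeSAct A)), (x = TZ (AeSAct A) \/ tsnd x = h) ->
     (alf LU x = Z0 A \/ dg A (alf LU x) = h).
Proof.
  intros h x [H|H].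
  - left. rewrite H. apply alf_TZ.
  - unfold alf.
    destruct (proj2_sig (tfst x)) as [Z|Z].
    + left. rewrite Z. apply ps_z.
    + destruct (excluded_middle_informative (proj1_sig (tfst x) = Z0 A)) as [Z'|Z'].
      * left. rewrite Z'. apply ps_z.
      * right. change (dg A (ps A (tsnd x) (proj1_sig (tfst x))) = h).
        rewrite ps_deg by exact Z'. rewrite Z, gmul1l. exact H.
Qed.

Definition alfH (G : Group) (S : GrSemigroup G) (A : EqOb S) (LU : has_local_units S) :
  @Hom (FGrAct S) (tOb (AeOb A LU)) (eo A) :=
  @mkHom G S (tOb (AeOb A LU)) (eo A) (alf LU) (@alf_act G S A LU) (@alf_deg G S A LU).

Lemma alf_eq (G : Group) (S : GrSemigroup G) (A : EqOb S) (LU : has_local_units S) :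
  forall g x, ap (alfH A LU) (ap (epsi (IndOb (AeOb A LU)) g) x) =
              ap (epsi A g) (ap (alfH A LU) x).
Proof.
  intros g.
  change (forall x : TC (AeSAct A), alf LU (MK (tfst x) (gmul (tsnd x) g)) = ps A g (alf LU x)).
  intros x.
  destruct (excluded_middle_informative (tfst x = aez A)) as [E|E].
  - rewrite MK_zero by exact E. rewrite alf_TZ. unfold alf. rewrite E. simpl.
    rewrite !ps_z. reflexivity.
  - unfold alf. rewrite MK_fst, MK_snd by exact E. rewrite ps_comp. reflexivity.
Qed.

Definition bet (G : Group) (S : GrSemigroup G) (A : EqOb S) (LU : has_local_units S)
  (y : Car A) : TC (AeSAct A) := MK (X := AeSAct A) (Mf A y) (dg A y).

Lemma Mf_zero (G : Group) (S : GrSemigroup G) (A : EqOb S) : Mf A (Z0 A) = aez A.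
Proof. apply ae_ext. rewrite Mf_val. apply ps_z. Qed.

Lemma Mf_nz (G : Group) (S : GrSemigroup G) (A : EqOb S) y : y <> Z0 A -> Mf A y <> aez A.
Proof.
  intros H E. apply (f_equal (@proj1_sig _ _)) in E. rewrite Mf_val in E.
  apply (ps_nz (g := ginv (dg A y)) H). exact E.
Qed.

Lemma bet_zero (G : Group) (S : GrSemigroup G) (A : EqOb S) (LU : has_local_units S) y :
  y = Z0 A -> bet LU y = TZ (AeSAct A).
Proof. intros ->. unfold bet. apply MK_zero. apply Mf_zero. Qed.

Lemma bet_act (G : Group) (S : GrSemigroup G) (A : EqOb S) (LU : has_local_units S) :
  forall (s : S) y, bet LU (ac A s y) = tact s (bet LU y).
Proof.
  intros s y.
  destruct (excluded_middle_informative (ac A s y = Z0 A)) as [E|E].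
  - rewrite (bet_zero LU E). unfold bet, tact. rewrite MK_fst. symmetry. apply MK_zero.
    change (ract s (Mf A y) = aez A). rewrite <- Mf_step, E. apply Mf_zero.
  - unfold bet, tact. rewrite MK_fst.
    assert (Ey : y <> Z0 A) by (intros Z; apply E; rewrite Z; apply ac_z).
    rewrite MK_snd by (apply Mf_nz, Ey). apply MK_eq.
    apply Mf_step. apply ac_deg, E.
Qed.

Lemma bet_deg (G : Group) (S : GrSemigroup G) (A : EqOb S) (LU : has_local_units S) :
  forall h (y : Car A), (y = Z0 A \/ dg A y = h) ->
     (bet LU y = TZ (AeSAct A) \/ tsnd (bet LU y) = h).
Proof.
  intros h y [H|H].
  - left. apply bet_zero, H.
  - destruct (excluded_middle_informative (y = Z0 A)) as [E|E].
    + left. apply bet_zero, E.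
    + right. unfold bet. rewrite MK_snd by (apply Mf_nz, E).
      exact H.
Qed.

Definition betH (G : Group) (S : GrSemigroup G) (A : EqOb S) (LU : has_local_units S) :
  @Hom (FGrAct S) (eo A) (tOb (AeOb A LU)) :=
  @mkHom G S (eo A) (tOb (AeOb A LU)) (bet LU) (@bet_act G S A LU) (@bet_deg G S A LU).

Lemma bet_eq (G : Group) (S : GrSemigroup G) (A : EqOb S) (LU : has_local_units S) :
  forall g y, ap (betH A LU) (ap (epsi A g) y) =
              ap (epsi (IndOb (AeOb A LU)) g) (ap (betH A LU) y).
Proof.
  intros g.
  change (forall y : Car A, bet LU (ps A g y) =
     MK (X := AeSAct A) (tfst (bet LU y)) (gmul (tsnd (bet LU y)) g)).
  intros y.
  destruct (excluded_middle_informative (y = Z0 A)) as [E|E].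
  - rewrite E, ps_z, (bet_zero LU eq_refl). symmetry. apply MK_zero. apply TZ_fst.
  - unfold bet. rewrite MK_fst, MK_snd by (apply Mf_nz, E).
    rewrite ps_deg by exact E. apply MK_eq; [|reflexivity].
    apply ae_ext. rewrite !Mf_val, ps_deg by exact E. rewrite ps_comp.
    f_equal. rewrite ginv_mul, gKV. reflexivity.
Qed.

Lemma Ind_esurj (G : Group) (S : GrSemigroup G) (LU : has_local_units S) : esurj (Ind S).
Proof.
  intros A. exists (AeOb A LU).
  exists (@Build_EqHom G S (IndOb (AeOb A LU)) A (alfH A LU) (@alf_eq G S A LU)).
  exists (@Build_EqHom G S A (IndOb (AeOb A LU)) (betH A LU) (@bet_eq G S A LU)).
  split.
  - change (forall x : TC (AeSAct A), bet LU (alf LU x) = x). intros x.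
    destruct (excluded_middle_informative (tfst x = aez A)) as [E|E].
    + rewrite bet_zero. symmetry. apply T_zero, E.
      unfold alf. rewrite E. apply ps_z.
    + assert (E' : proj1_sig (tfst x) <> Z0 A) by (intros Z; apply E, aez_val, Z).
      unfold bet, alf. transitivity (MK (X:=AeSAct A) (tfst x) (tsnd x)); [| apply MK_eta]. apply MK_eq.
      * rewrite <- (Mf_fix (tfst x)) at 2. apply ae_ext. rewrite !Mf_val.
        rewrite ps_deg by exact E'. rewrite ps_comp.
        destruct (proj2_sig (tfst x)) as [Z|Z]; [contradiction|]. rewrite Z, gmul1l, gmulVr, ginv_one.
        reflexivity.
      * rewrite ps_deg by exact E'. destruct (proj2_sig (tfst x)) as [Z|Z]; [contradiction|].
        rewrite Z. apply gmul1l.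
  - change (forall y : Car A, alf LU (bet LU y) = y). intros y.
    destruct (excluded_middle_informative (y = Z0 A)) as [E|E].
    + rewrite (bet_zero LU E), alf_TZ. symmetry. exact E.
    + unfold alf, bet. rewrite MK_fst, MK_snd by (apply Mf_nz, E). rewrite Mf_val, ps_comp, gmulVl.
      apply ps_one.
Qed.

Lemma Ind_ffes (G : Group) (S : GrSemigroup G) (LU : has_local_units S) : ffes (Ind S).
Proof. split; [apply Ind_faithful | split; [apply Ind_full | apply Ind_esurj, LU]]. Qed.
Theorem theorem4p4 (G : Group) (S T : GrSemigroup G) :
  has_local_units S -> has_local_units T ->
  graded_Morita_equivalent S T -> Morita_equivalent S T.
Proof.
  intros LUS LUT (F & F' & gF & gF' & [eta] & [eps]).
  pose proof (equiv_ffes eta eps) as FF.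
  pose proof (EqF_ffes gF FF) as E1.
  pose proof (Ind_ffes LUS) as IS.
  pose proof (Ind_ffes LUT) as IT.
  pose proof (CatEquivalent_sym (ffes_equiv IT)) as CT.
  destruct (CatEquivalent_ffes CT) as [K HK].
  apply (ffes_equiv (F := CompF K (CompF (EqF gF) (Ind S)))).
  apply ffes_comp; [apply ffes_comp|]; assumption.
Qed.
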